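(* Let $q$ be an odd prime power and $m\geq 2$. Then the largest odd coset leader modulo $q^m-1$ is $\delta_1=(q-1)q^{m-1}-1$.
   Context: For $0\leq i\leq q^m-2$, the $q$-cyclotomic coset of $i$ modulo $q^m-1$ is $\{i,iq,iq^2,\ldots\}\bmod (q^m-1)$, and its smallest element is its coset leader. An odd coset leader is a coset leader that is an odd integer. *)

(* Defs.v *)
From mathcomp Require Export all_boot.
Set Implicit Arguments. Unset Strict Implicit. Unset Printing Implicit Defensive.

Definition prime_power (q : nat) : Prop :=
  exists p k : nat, prime p /\ 0 < k /\ q = p ^ k.

Definition cyclotomic_coset (q m i : nat) : nat -> Prop :=
  fun x => exists j : nat, x = (i * q ^ j) %% (q ^ m - 1).

Definition coset_leader (q m i : nat) : Prop :=
  i <= q ^ m - 2 /\ (forall x, cyclotomic_coset q m i x -> i <= x).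

(* Main.v *)
Require Import Defs.
From mathcomp Require Import all_boot.
From mathcomp Require Import zify.

Lemma compl n x Q : 0 < x <= n -> (x*Q) %% n != 0 ->
  ((n-x)*Q) %% n = n - (x*Q) %% n.
Proof.
move=> /andP[x0 xn] nz.
have n0 : 0 < n by lia.
have H : n %| ((n-x)*Q) %% n + (x*Q) %% n.
  by rewrite /dvdn modnDm -mulnDl subnK // modnMr.
have l1 := ltn_pmod ((n-x)*Q) n0. have l2 := ltn_pmod (x*Q) n0.
case/dvdnP: H => k Hk.
have k1 : k = 1.
  have : 0 < k * n by rewrite -Hk; move: nz; case: ((x*Q) %% n); lia.
  have : k * n < 2 * n by rewrite -Hk; lia.
  case: k {Hk} => [|[|k]] //; rewrite ?mul0n //; nia.
move: Hk; rewrite k1 mul1n; lia.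
Qed.

Lemma powmod q m k : 1 < q -> 2 <= m ->
  (q ^ k) %% (q ^ m - 1) = q ^ (k %% m).
Proof.
move=> q1 m1.
have qm : q ^ (m - 1) < q ^ m - 1.
  have e : q ^ m = q * q ^ (m - 1) by rewrite -expnS; congr (_ ^ _); lia.
  have : q ^ 1 <= q ^ (m - 1) by rewrite leq_exp2l //; lia.
  rewrite e expn1; nia.
rewrite {1}(divn_eq k m) expnD [k %/ m * m]mulnC expnM -modnMml -modnXm.
have -> : (q ^ m) %% (q ^ m - 1) = 1.
  have h : q ^ m = 1 + (q ^ m - 1) by lia.
  rewrite {1}h -modnDmr modnn addn0 modn_small //; lia.
rewrite exp1n modnMml mul1n modn_small //.
apply: leq_ltn_trans qm; rewrite leq_exp2l //; have := ltn_pmod k (ltnW m1); lia.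
Qed.

Theorem lemma16 (q m : nat) :
  prime_power q -> odd q -> 2 <= m ->
  let delta1 := (q - 1) * q ^ (m - 1) - 1 in
  [/\ odd delta1, coset_leader q m delta1 &
      forall i, coset_leader q m i -> odd i -> i <= delta1].
Proof.
move=> [p [k [pp [k0 qe]]]] oq m2 /=.
have q2 : 1 < q.
  have p2 := prime_gt1 pp.
  apply: (leq_trans p2); rewrite qe -{1}(expn1 p) leq_exp2l //.
set Q1 := q ^ (m - 1).
have e : q ^ m = q * Q1 by rewrite /Q1 -expnS; congr (_ ^ _); lia.
have Q10 : 0 < Q1 by rewrite expn_gt0; lia.
have d1 : (q - 1) * Q1 - 1 = (q ^ m - 1) - Q1 by rewrite e; nia.
split.
- rewrite oddB; last by nia.
  rewrite oddM oddB; last by lia.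
  by rewrite oq.
- split; first by rewrite e; nia.
  move=> x [j ->].
  rewrite d1 compl; last first.
    rewrite /Q1 -expnD powmod //.
    by rewrite -lt0n expn_gt0; lia.
    by apply/andP; split => //; rewrite e; nia.
  rewrite /Q1 -expnD powmod //.
  have : q ^ ((m - 1 + j) %% m) <= q ^ (m - 1).
    rewrite leq_exp2l //; have := ltn_pmod (m - 1 + j) (ltnW m2); lia.
  rewrite -/Q1; lia.
- move=> i [ile ilead] _.
  rewrite leqNgt; apply/negP => gt.
  set n := q ^ m - 1.
  set c := n - i.
  have c0 : 0 < c by rewrite /c /n; lia.
  have cQ : c < Q1 by rewrite /c /n; lia.
  set t := trunc_log q c.
  have t1 := trunc_logP q2 c0. have t2 := trunc_log_ltn c q2.
  have tm : t < m - 1.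
    rewrite -(ltn_exp2l _ _ q2); apply: leq_ltn_trans t1 cQ.
  set j := m - 1 - t.
  have lo : Q1 <= c * q ^ j.
    rewrite /Q1 (_ : m - 1 = t + j); last by rewrite /j; lia.
    by rewrite expnD leq_mul2r t1 orbT.
  have hi : c * q ^ j < q ^ m.
    rewrite (_ : m = t.+1 + j); last by rewrite /j; lia.
    by rewrite expnD ltn_mul2r t2 expn_gt0 (ltnW q2).
  have hn : c * q ^ j < n.
    have : c * q ^ j != n.
      apply/eqP => h.
      have : q %| c * q ^ j by rewrite dvdn_mull // dvdn_exp // /j; lia.
      rewrite h /n => /(dvdn_sub (dvdn_exp (ltnW m2) (dvdnn q))).
      rewrite subKn; last by rewrite expn_gt0; lia.
      by rewrite dvdn1; lia.
    rewrite /n; lia.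
  have := ilead _ (ex_intro _ j erefl).
  rewrite -/n (_ : i = n - c); last by rewrite /c /n; lia.
  rewrite compl; last first.
    by rewrite modn_small //; lia.
    by apply/andP; split => //; rewrite /c; lia.
  rewrite modn_small //.
  move: gt; rewrite d1 -/n; lia.
Qed.
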